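(* Let $G=(V,E,w)$ be an undirected graph with edge weights $w:E\to\mathbb{R}^+$, and let $s,t\in V$. Run the bidirectional stepping search described in the context, using the pruning rule ''prune $u^{\oplus}$ (for $\oplus\in\{+,-\}$) if and only if $\delta[u^{\oplus}]\ge \mu/2$'', where $\mu$ is the current value of the global variable at the time of the check. Then, for every choice of thresholds $\theta$ in the rounds and every interleaving of the parallel atomic operations, if the algorithm terminates (i.e. the frontier becomes empty), the returned value $\mu$ equals the shortest-path distance $d(s,t)$ in $G$ (with $d(s,t)=+\infty$ if $t$ is unreachable from $s$).
   Context: Bidirectional stepping search with a pruning rule. For every vertex $v\in V$ there are two copies: $v^{+}$ (search from $s$) and $v^{-}$ (search from $t$). Each copy has a tentative distance $\delta[v^{\pm}]$, initialized to $+\infty$. A global variable $\mu$ is initialized to $+\infty$. Initialization sets $\delta[s^{+}]=0$ and $\delta[t^{-}]=0$, and inserts $s^{+}$ and $t^{-}$ into a set $F$, the frontier. While $F\neq\emptyset$, a round is executed. A real threshold $\theta$ is chosen, and it may depend arbitrarily on the current state. All elements $u^{\oplus}\in F$ with $\delta[u^{\oplus}]\le\theta$ are removed from $F$. Each removed $u^{\oplus}$ is processed in parallel as follows: - If $u^{\oplus}$ satisfies the pruning rule, nothing is done. - Otherwise, for every neighbor $v$ of $u$, the algorithm performs an atomic write-min $\delta[v^{\oplus}]\leftarrow\min(\delta[v^{\oplus}],\,\delta[u^{\oplus}]+w(u,v))$. - If this write-min strictly decreased $\delta[v^{\oplus}]$, the algorithm then atomically sets $\mu\leftarrow\min(\mu,\,\delta[v^{+}]+\delta[v^{-}])$.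 After that, if $v^{\oplus}$ does not satisfy the pruning rule, $v^{\oplus}$ is inserted into $F$ (if not already present). At termination the algorithm returns $\mu$. Tentative distances only decrease over time. $d(u,v)$ denotes the true shortest-path distance in $G$. *)

(* Defs.v *)
From HB Require Import structures.
From mathcomp Require Import all_boot all_order all_algebra.
From mathcomp Require Import classical_sets boolp reals constructive_ereal ereal.
Set Implicit Arguments. Unset Strict Implicit. Unset Printing Implicit Defensive.
Import Order.TTheory GRing.Theory Num.Theory.
Local Open Scope classical_set_scope.
Local Open Scope ring_scope.
Local Open Scope ereal_scope.

Section BiSearch.
Variables (R : realType) (V : finType) (E : rel V) (w : V -> V -> R).

(** Weight of the walk s = x0, x1, ..., xk (p = [:: x1; ...; xk]). *)
Fixpoint pathw (x : V) (p : seq V) : R :=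
  match p with
  | [::] => 0%R
  | y :: q => (w x y + pathw y q)%R
  end.

Definition dist (s t : V) : \bar R :=
  ereal_inf [set (pathw s p)%:E | p in [set p : seq V | path E s p /\ last s p = t]].

(** Copies v^+ and v^- are (v, true) and (v, false). *)
Record state := State {
  dlt   : V -> bool -> \bar R;
  mu    : \bar R;
  front : {set V * bool};
  pend  : {set V * bool};           (* removed in this round, pruning check of
                                       u^(+/-) not yet executed *)
  thr   : V -> bool -> V -> nat     (* per-(u^(+/-), neighbor v) sub-thread:
                                       0 idle/done, 1 write-min pending,
                                       2 mu-update pending,
                                       3 pruning-check/insert of v pending *)
}.

Definition pruned (d : V -> bool -> \bar R) (m : \bar R) (x : V) (b : bool) : bool :=
  m * (2%:R^-1)%:E <= d x b.

Definition upd_dlt (d : V -> bool -> \bar R) (v : V) (b : bool) (a : \bar R) :=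
  fun x c => if (x == v) && (c == b) then a else d x c.

Definition upd_thr (h : V -> bool -> V -> nat) (u : V) (b : bool) (v : V) (k : nat) :=
  fun x c y => if [&& x == u, c == b & y == v] then k else h x c y.

Definition idle (st : state) : Prop :=
  pend st = finset.set0 /\ forall u b v, thr st u b v = 0%N.

Inductive step : state -> state -> Prop :=
  | step_round st (theta : R) :
      idle st -> front st != finset.set0 ->
      step st (State (dlt st) (mu st)
                 [set x in front st | ~~ (dlt st x.1 x.2 <= theta%:E)]
                 [set x in front st | dlt st x.1 x.2 <= theta%:E]
                 (thr st))
  | step_prune st u b :
      (u, b) \in pend st -> pruned (dlt st) (mu st) u b ->
      step st (State (dlt st) (mu st) (front st) (pend st :\ (u, b)) (thr st))
  | step_expand st u b :
      (u, b) \in pend st -> ~~ pruned (dlt st) (mu st) u b ->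
      step st (State (dlt st) (mu st) (front st) (pend st :\ (u, b))
                 (fun x c y => if (x == u) && (c == b) && E u y then 1%N
                               else thr st x c y))
  (* atomic write-min delta[v^b] <- min(delta[v^b], delta[u^b] + w(u,v)) *)
  | step_relax_dec st u b v :
      thr st u b v = 1%N ->
      dlt st u b + (w u v)%:E < dlt st v b ->
      step st (State (upd_dlt (dlt st) v b (dlt st u b + (w u v)%:E)) (mu st)
                 (front st) (pend st) (upd_thr (thr st) u b v 2))
  | step_relax_nodec st u b v :
      thr st u b v = 1%N ->
      ~~ (dlt st u b + (w u v)%:E < dlt st v b) ->
      step st (State (dlt st) (mu st) (front st) (pend st) (upd_thr (thr st) u b v 0))
  | step_mu st u b v :
      thr st u b v = 2%N ->
      step st (State (dlt st) (Order.min (mu st) (dlt st v true + dlt st v false))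
                 (front st) (pend st) (upd_thr (thr st) u b v 3))
  | step_insert st u b v :
      thr st u b v = 3%N ->
      step st (State (dlt st) (mu st)
                 (if pruned (dlt st) (mu st) v b then front st
                  else (v, b) |: front st)
                 (pend st) (upd_thr (thr st) u b v 0)).

Inductive reachable (st : state) : state -> Prop :=
  | reach_refl : reachable st st
  | reach_step st1 st2 : reachable st st1 -> step st1 st2 -> reachable st st2.

Definition init (s t : V) : state :=
  State (fun x b => if ((x == s) && b) || ((x == t) && ~~ b) then 0 else +oo)
        +oo [set (s, true); (t, false)] finset.set0 (fun _ _ _ => 0%N).

Definition terminated (st : state) : Prop := idle st /\ front st = finset.set0.

End BiSearch.

(* Main.v *)
Require Import Defs.
From HB Require Import structures.
From mathcomp Require Import all_boot all_order all_algebra.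
From mathcomp Require Import classical_sets boolp reals constructive_ereal ereal.
From mathcomp Require Import lra.
Import Order.TTheory GRing.Theory Num.Theory.
Local Open Scope ring_scope.

Section Proof.
Variables (R : realType) (V : finType) (E : rel V) (w : V -> V -> R) (s t : V).
Hypothesis Esym : symmetric E.
Hypothesis wsym : forall u v, E u v -> w u v = w v u.
Hypothesis wpos : forall u v, E u v -> 0 < w u v.
Hypothesis hst : s != t.

Local Notation pathw := (pathw w).

Lemma pathw_cat x p q : pathw x (p ++ q) = pathw x p + pathw (last x p) q.
Proof. elim: p x => [|y p IH] x /=; first by rewrite add0r. by rewrite IH addrA. Qed.

Lemma pathw_ge0 x p : path E x p -> 0 <= pathw x p.
Proof.
elim: p x => [|y p IH] x //= /andP[Exy Hp].
by rewrite addr_ge0 ?IH // ltW // wpos.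
Qed.

Local Open Scope ereal_scope.

Definition WOK (b : bool) (v : V) (x : \bar R) : Prop :=
  x = +oo \/ exists p, (if b then path E s p /\ last s p = v
                        else path E v p /\ last v p = t) /\
                       ((if b then pathw s p else pathw v p)%:E <= x).

Lemma WOK_nm b v x : WOK b v x -> x != -oo.
Proof. by case=> [->|[p [_ H]]] //; apply/negP => /eqP Hx; rewrite Hx leeNy_eq in H. Qed.

Arguments WOK_nm {b v x}.

Record Inv (st : state R V) : Prop := {
  inv_walk : forall v b, WOK b v (dlt st v b);
  inv_mu : mu st = +oo \/ exists p, path E s p /\ last s p = t /\ (pathw s p)%:E <= mu st;
  inv_E : forall u b v, thr st u b v != 0%N -> E u v;
  inv_pend : forall u b v, (u, b) \in pend st -> thr st u b v = 0%N;
  inv_sum : forall v, mu st <= dlt st v true + dlt st v false \/ exists u b, thr st u b v = 2%N;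
  inv_ok : forall x c, dlt st x c = +oo \/ (x, c) \in front st \/ (x, c) \in pend st \/
            pruned (dlt st) (mu st) x c \/ (exists u, thr st u c x = 2%N \/ thr st u c x = 3%N) \/
            (forall y, E x y -> dlt st y c <= dlt st x c + (w x y)%:E \/ thr st x c y = 1%N);
  inv_s : dlt st s true <= 0;
  inv_t : dlt st t false <= 0
}.

Arguments inv_walk {st}. Arguments inv_mu {st}. Arguments inv_E {st}.
Arguments inv_pend {st}. Arguments inv_sum {st}. Arguments inv_ok {st}.
Arguments inv_s {st}. Arguments inv_t {st}.

Lemma Inv_init : Inv (init R s t).
Proof.
split => //=.
- move=> v [] /=; rewrite ?andbT ?andbF ?orbF ?andbT;
    (case: eqP => [->|_]; [by right; exists [::] | by left]).
- by left.
- move=> v; left => /=; rewrite !andbT !andbF !orbF /=.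
  case: eqP => [->|_]; first by rewrite (negbTE hst) addey.
  by case: eqP => _; rewrite ?addye ?addyy.
- move=> x [] /=; rewrite ?andbT ?andbF ?orbF ?andbT;
    (case: eqP => [->|_]; [right; left; rewrite !inE eqxx ?orbT // | by left]).
- by rewrite eqxx.
- by rewrite eqxx orbT.
Qed.


Definition Pmu (x : \bar R) := exists p, path E s p /\ last s p = t /\ (pathw s p)%:E <= x.

Lemma sum_ok v d1 d2 : WOK true v d1 -> WOK false v d2 -> d1 + d2 = +oo \/ Pmu (d1 + d2).
Proof.
move=> H1 H2; case: (H1) => [->|[p [[Hp Hl] Hw]]].
  by left; rewrite addye // (WOK_nm H2).
case: (H2) => [->|[q [[Hq Hl'] Hw']]].
  by left; rewrite addey // (WOK_nm H1).
right; exists (p ++ q); split; first by rewrite cat_path Hp /= Hl Hq.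
split; first by rewrite last_cat Hl Hl'.
by rewrite pathw_cat Hl EFinD leeD.
Qed.

Lemma min_ok m S : (m = +oo \/ Pmu m) -> (S = +oo \/ Pmu S) ->
  Order.min m S = +oo \/ Pmu (Order.min m S).
Proof. by rewrite /Order.min; case: ifP. Qed.

Lemma inv_round st th : idle st -> Inv st ->
  Inv (State (dlt st) (mu st)
                 [set x in front st | ~~ (dlt st x.1 x.2 <= th%:E)]
                 [set x in front st | dlt st x.1 x.2 <= th%:E]
                 (thr st)).
Proof.
move=> [Hp Ht] I; split => /=; try by apply I.
- by move=> u b v _; apply: Ht.
- move=> x c; case: (inv_ok I x c) => [H|[H|[H|H]]]; first by left.
  + case Hth: (dlt st x c <= th%:E); right; [right; left|left]; by rewrite inE /= H Hth.
  + by rewrite Hp inE in H.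
  + by right; right; right.
Qed.

Lemma inv_prune st u b : (u, b) \in pend st -> pruned (dlt st) (mu st) u b -> Inv st ->
  Inv (State (dlt st) (mu st) (front st) (pend st :\ (u, b)) (thr st)).
Proof.
move=> Hin Hpr I; split => /=; try by apply I.
- by move=> x c v; rewrite !inE => /andP[_ H]; exact: inv_pend I _ _ _ H.
- move=> x c; case: (inv_ok I x c) => [H|[H|[H|H]]]; [by left|by right;left| |by right;right;right].
  case: (eqVneq (x, c) (u, b)) => [[-> ->]|ne]; first by right; right; right; left.
  by right; right; left; rewrite !inE ne H.
Qed.

Lemma inv_expand st u b : (u, b) \in pend st -> Inv st ->
  Inv (State (dlt st) (mu st) (front st) (pend st :\ (u, b))
                 (fun x c y => if (x == u) && (c == b) && E u y then 1%N
                               else thr st x c y)).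
Proof.
move=> Hin I; split => /=; try by apply I.
- move=> x c y; case: ifP => [/andP[/andP[/eqP-> _] ->] //|_]; exact: inv_E I x c y.
- move=> x c v; rewrite !inE => /andP[ne H].
  case: ifP => [/andP[/andP[/eqP ex /eqP ec] _]|_]; last exact: inv_pend I _ _ _ H.
  by rewrite ex ec eqxx in ne.
- move=> v; case: (inv_sum I v) => [H|[u0 [b0 H]]]; [by left|right; exists u0, b0].
  case: ifP => // /andP[/andP[/eqP e1 /eqP e2] _].
  by move: H; rewrite e1 e2 (inv_pend I _ _ _ Hin).
- move=> x c; case: (inv_ok I x c) => [H|[H|[H|[H|[[u0 H]|H]]]]].
  + by left.
  + by right; left.
  + case: (eqVneq (x, c) (u, b)) => [[-> ->]|ne].
      by right; right; right; right; right => y Hy; right; rewrite !eqxx Hy.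
    by right; right; left; rewrite !inE ne H.
  + by right; right; right; left.
  + right; right; right; right; left; exists u0.
    case: ifP => [/andP[/andP[/eqP e1 /eqP e2] _]|_ //].
    by move: H; rewrite e1 e2 (inv_pend I _ _ _ Hin); case.
  + right; right; right; right; right => y Hy.
    case: (H y Hy) => [H2|H2]; [by left|right]; by case: ifP.
Qed.

Lemma inv_relax_dec st u b v :
  thr st u b v = 1%N -> dlt st u b + (w u v)%:E < dlt st v b -> Inv st ->
  Inv (State (upd_dlt (dlt st) v b (dlt st u b + (w u v)%:E)) (mu st)
                 (front st) (pend st) (upd_thr (thr st) u b v 2)).
Proof.
move=> H1 Hlt I.
set a := dlt st u b + (w u v)%:E.
have dle : forall y c, upd_dlt (dlt st) v b a y c <= dlt st y c.
  by move=> y c; rewrite /upd_dlt; case: ifP => [/andP[/eqP-> /eqP->]|_]; [exact: ltW|].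
have dne : forall y c, (y, c) != (v, b) -> upd_dlt (dlt st) v b a y c = dlt st y c.
  move=> y c ne; rewrite /upd_dlt; case: ifP => // /andP[/eqP ey /eqP ec].
  by rewrite ey ec eqxx in ne.
have Euv : E u v by apply: (inv_E I u b v); rewrite H1.
split => /=.
- move=> x c; rewrite {1}/upd_dlt; case: ifP => [/andP[/eqP -> /eqP ->]|_]; last exact: inv_walk.
  right; case: (inv_walk I u b) => [Hu|[p [Hp Hw]]].
    by move: Hlt; rewrite /a Hu addye // ltNge leey.
  rewrite /a; case: b Hp Hw {H1 Hlt a dle dne} => [[Hp Hl]|[Hp Hl]] Hw.
  + exists (rcons p v); split; first by rewrite rcons_path Hp Hl Euv last_rcons.
    by rewrite -cats1 pathw_cat /= addr0 Hl EFinD leeD.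
  + exists (u :: p); split; first by rewrite /= Esym Euv Hp.
    by rewrite /= -wsym // EFinD addrC leeD.
- exact: inv_mu I.
- move=> x c y; rewrite /upd_thr; case: ifP => [/and3P[/eqP-> _ /eqP->] _ //|_].
  exact: inv_E.
- move=> x c y Hin; rewrite /upd_thr; case: ifP => [/and3P[/eqP ex /eqP ec /eqP ey]|_].
    by move: H1; rewrite -ex -ec -ey (inv_pend I _ _ _ Hin).
  exact: inv_pend I _ _ _ Hin.
- move=> x; case: (eqVneq x v) => [->|xv].
    by right; exists u, b; rewrite /upd_thr !eqxx.
  case: (inv_sum I x) => [H|[u0 [b0 H]]].
    by left; rewrite !dne // xpair_eqE negb_and xv.
  by right; exists u0, b0; rewrite /upd_thr; case: ifP.
- move=> x c; case: (eqVneq (x, c) (v, b)) => [[-> ->]|ne].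
    by right; right; right; right; left; exists u; left; rewrite /upd_thr !eqxx.
  have dx := dne _ _ ne.
  case: (inv_ok I x c) => [H|[H|[H|[H|[[u0 H]|H]]]]].
  + by left; rewrite dx.
  + by right; left.
  + by right; right; left.
  + by right; right; right; left; rewrite /pruned dx.
  + right; right; right; right; left; exists u0; rewrite /upd_thr.
    by case: ifP => _; [left|].
  + right; right; right; right; right => y Hy; rewrite dx.
    case: (H y Hy) => [H2|H2]; first by left; apply: le_trans (dle y c) H2.
    rewrite /upd_thr; case: ifP => [/and3P[/eqP ex /eqP ec /eqP ey]|_]; last by right.
    left; move: dx; rewrite ex ec ey => dx.
    have -> : upd_dlt (dlt st) v b a v b = a by rewrite /upd_dlt !eqxx.
    by [].
- exact: le_trans (dle _ _) (inv_s I).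
- exact: le_trans (dle _ _) (inv_t I).
Qed.

Lemma inv_relax_nodec st u b v :
  thr st u b v = 1%N -> ~~ (dlt st u b + (w u v)%:E < dlt st v b) -> Inv st ->
  Inv (State (dlt st) (mu st) (front st) (pend st) (upd_thr (thr st) u b v 0)).
Proof.
move=> H1 Hn I; split => /=; try by apply I.
- move=> x c y; rewrite /upd_thr; case: ifP => _; [by rewrite eqxx|exact: inv_E].
- by move=> x c y Hin; rewrite /upd_thr; case: ifP => _ //; exact: inv_pend.
- move=> x; case: (inv_sum I x) => [H|[u0 [b0 H]]]; [by left|right; exists u0, b0].
  rewrite /upd_thr; case: ifP => [/and3P[/eqP ex /eqP ec /eqP ey]|_ //].
  by move: H; rewrite ex ec ey H1.
- move=> x c; case: (inv_ok I x c) => [H|[H|[H|[H|[[u0 H]|H]]]]].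
  + by left.
  + by right; left.
  + by right; right; left.
  + by right; right; right; left.
  + right; right; right; right; left; exists u0.
    rewrite /upd_thr; case: ifP => [/and3P[/eqP ex /eqP ec /eqP ey]|_ //].
    by move: H; rewrite ex ec ey H1; case.
  + right; right; right; right; right => y Hy.
    case: (H y Hy) => [H2|H2]; first by left.
    rewrite /upd_thr; case: ifP => [/and3P[/eqP ex /eqP ec /eqP ey]|_]; last by right.
    by left; rewrite ex ec ey leNgt.
Qed.

Lemma inv_mustep st u b v :
  thr st u b v = 2%N -> Inv st ->
  Inv (State (dlt st) (Order.min (mu st) (dlt st v true + dlt st v false))
                 (front st) (pend st) (upd_thr (thr st) u b v 3)).
Proof.
move=> H2 I.
have mle : Order.min (mu st) (dlt st v true + dlt st v false) <= mu st by rewrite ge_min lexx.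
split => /=; try by apply I.
- apply: min_ok; first exact: inv_mu I.
  exact: sum_ok (inv_walk I v true) (inv_walk I v false).
- move=> x c y; rewrite /upd_thr; case: ifP => [/and3P[/eqP-> _ /eqP->] _|_]; last exact: inv_E.
  by apply: (inv_E I u b v); rewrite H2.
- move=> x c y Hin; rewrite /upd_thr; case: ifP => [/and3P[/eqP ex /eqP ec /eqP ey]|_].
    by move: H2; rewrite -ex -ec -ey (inv_pend I _ _ _ Hin).
  exact: inv_pend I _ _ _ Hin.
- move=> x; case: (eqVneq x v) => [->|xv].
    by left; rewrite ge_min lexx orbT.
  case: (inv_sum I x) => [H|[u0 [b0 H]]].
    by left; apply: le_trans mle H.
  right; exists u0, b0; rewrite /upd_thr; case: ifP => [/and3P[_ _ /eqP ex]|_ //].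
  by rewrite ex eqxx in xv.
- move=> x c; case: (inv_ok I x c) => [H|[H|[H|[H|[[u0 H]|H]]]]].
  + by left.
  + by right; left.
  + by right; right; left.
  + right; right; right; left; rewrite /pruned; apply: le_trans H.
    by apply: lee_wpmul2r => //; rewrite lee_fin invr_ge0 ler0n.
  + right; right; right; right; left; exists u0.
    by rewrite /upd_thr; case: ifP => _; [right|].
  + right; right; right; right; right => y Hy.
    case: (H y Hy) => [H3|H3]; first by left.
    rewrite /upd_thr; case: ifP => [/and3P[/eqP ex /eqP ec /eqP ey]|_]; last by right.
    by move: H3; rewrite ex ec ey H2.
Qed.

Lemma inv_insert st u b v :
  thr st u b v = 3%N -> Inv st ->
  Inv (State (dlt st) (mu st)
                 (if pruned (dlt st) (mu st) v b then front st
                  else (v, b) |: front st)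
                 (pend st) (upd_thr (thr st) u b v 0)).
Proof.
move=> H3 I; split => /=; try by apply I.
- move=> x c y; rewrite /upd_thr; case: ifP => _; [by rewrite eqxx|exact: inv_E].
- by move=> x c y Hin; rewrite /upd_thr; case: ifP => _ //; exact: inv_pend.
- move=> x; case: (inv_sum I x) => [H|[u0 [b0 H]]]; [by left|right; exists u0, b0].
  rewrite /upd_thr; case: ifP => [/and3P[/eqP ex /eqP ec /eqP ey]|_ //].
  by move: H; rewrite ex ec ey H3.
- move=> x c; case: (inv_ok I x c) => [H|[H|[H|[H|[[u0 H]|H]]]]].
  + by left.
  + by right; left; case: ifP => _ //; rewrite inE H orbT.
  + by right; right; left.
  + by right; right; right; left.
  + case Hc: [&& u0 == u, c == b & x == v].
      move: Hc => /and3P[_ /eqP ec /eqP ey].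
      rewrite ec ey; case Hp: (pruned (dlt st) (mu st) v b).
        by right; right; right; left.
      by right; left; rewrite setU11.
    by right; right; right; right; left; exists u0; rewrite /upd_thr Hc.
  + right; right; right; right; right => y Hy.
    case: (H y Hy) => [H4|H4]; first by left.
    rewrite /upd_thr; case: ifP => [/and3P[/eqP ex /eqP ec /eqP ey]|_]; last by right.
    by move: H4; rewrite ex ec ey H3.
Qed.

Lemma Inv_step st1 st2 : step E w st1 st2 -> Inv st1 -> Inv st2.
Proof.
case=> {st1 st2}.
- by move=> st th Hi _; apply: inv_round.
- by move=> st u b Hin Hpr; apply: inv_prune.
- by move=> st u b Hin _; apply: inv_expand.
- by move=> st u b v; apply: inv_relax_dec.
- by move=> st u b v; apply: inv_relax_nodec.
- by move=> st u b v; apply: inv_mustep.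
- by move=> st u b v; apply: inv_insert.
Qed.

Lemma Inv_reach st : reachable E w (init R s t) st -> Inv st.
Proof.
elim=> [|st1 st2 _ IH Hs]; first exact: Inv_init.
exact: Inv_step Hs IH.
Qed.

Lemma final_le (d : V -> bool -> \bar R) (m : \bar R) :
  (forall x c, d x c = +oo \/ pruned d m x c \/
      forall y, E x y -> d y c <= d x c + (w x y)%:E) ->
  (forall v, m <= d v true + d v false) ->
  d s true <= 0 -> d t false <= 0 ->
  forall p, path E s p -> last s p = t -> m <= (pathw s p)%:E.
Proof.
move=> T1 T2 Hs Ht p Hp Hl.
case: m T1 T2 => [r| |] T1 T2; last by rewrite leNye.
- pose hm := (r * 2^-1)%R.
  have CB : forall q y, path E y q -> last y q = t -> (pathw y q < hm)%R ->
      d y false <= (pathw y q)%:E.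
    elim=> [|z q IH] y /=; first by move=> _ -> _; exact: Ht.
    move=> /andP[Eyz Hq] Hl' Hlt.
    have Hlt' : (pathw z q < hm)%R by have := wpos _ _ Eyz; lra.
    have Hz := IH z Hq Hl' Hlt'.
    case: (T1 z false) => [H|[H|H]].
    + by move: Hz; rewrite H leye_eq.
    + move: H; rewrite /pruned -EFinM => H.
      by have := le_trans H Hz; rewrite lee_fin leNgt Hlt'.
    + have := H y; rewrite Esym => /(_ Eyz) H2; apply: le_trans H2 _.
      by rewrite (wsym _ _ Eyz) EFinD [X in _ <= X]addrC leeD.
  have CL : forall q x a, path E x q -> last x q = t -> d x true <= a%:E -> (a < hm)%R ->
      (r <= a + pathw x q)%R.
    elim=> [|y q IH] x a /=.
      move=> _ -> Hx _; rewrite addr0 -lee_fin; apply: le_trans (T2 t) _.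
      by rewrite -[a%:E]adde0; exact: leeD.
    move=> /andP[Exy Hq] Hl' Hx Ha.
    case: (T1 x true) => [H|[H|H]].
    + by move: Hx; rewrite H leye_eq.
    + move: H; rewrite /pruned -EFinM => H.
      by have := le_trans H Hx; rewrite lee_fin leNgt Ha.
    + have Hy : d y true <= (a + w x y)%:E.
        by apply: le_trans (H y Exy) _; rewrite EFinD leeD.
      case: (ltP (a + w x y)%R hm) => Hah.
        by have := IH y (a + w x y)%R Hq Hl' Hy Hah; lra.
      case: (leP r (a + (w x y + pathw y q))%R) => // Hlt; exfalso.
      have Hpw : (pathw y q < hm)%R by rewrite /hm in Hah *; lra.
      have Hz := CB q y Hq Hl' Hpw.
      have : r%:E <= (a + w x y + pathw y q)%:E.
        by apply: le_trans (T2 y) _; rewrite EFinD leeD.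
      by rewrite lee_fin; lra.
  rewrite lee_fin; case: (ltP 0%R hm) => H0.
    by have := CL p s 0%R Hp Hl Hs H0; rewrite add0r.
  have := pathw_ge0 _ _ Hp; rewrite /hm in H0; lra.
- have h2 : +oo * (2^-1)%:E = +oo :> \bar R by rewrite gt0_mulye // lte_fin invr_gt0 ltr0n.
  have CF : forall q x a, path E x q -> d x true <= a%:E ->
      exists b, d (last x q) true <= b%:E.
    elim=> [|y q IH] x a /=; first by move=> _ Hx; exists a.
    move=> /andP[Exy Hq] Hx.
    case: (T1 x true) => [H|[H|H]].
    + by move: Hx; rewrite H leye_eq.
    + by move: H; rewrite /pruned h2 => /le_trans/(_ Hx); rewrite leye_eq.
    + apply: (IH y (a + w x y)%R Hq).
      by apply: le_trans (H y Exy) _; rewrite EFinD leeD.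
  have [b Hb] := CF p s 0%R Hp Hs.
  rewrite Hl in Hb.
  by have := le_trans (T2 t) (leeD Hb Ht); rewrite adde0 leye_eq.
Qed.

Lemma main st0 : reachable E w (init R s t) st0 -> terminated st0 ->
  mu st0 = dist E w s t.
Proof.
move=> Hr [[Hp Ht] Hf].
have I := Inv_reach _ Hr.
have T1 : forall x c, dlt st0 x c = +oo \/ pruned (dlt st0) (mu st0) x c \/
      forall y, E x y -> dlt st0 y c <= dlt st0 x c + (w x y)%:E.
  move=> x c; case: (inv_ok I x c) => [H|[H|[H|[H|[[u H]|H]]]]].
  + by left.
  + by rewrite Hf inE in H.
  + by rewrite Hp inE in H.
  + by right; left.
  + by rewrite !Ht in H; case: H.
  + by right; right => y Hy; case: (H y Hy) => //; rewrite Ht.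
have T2 : forall v, mu st0 <= dlt st0 v true + dlt st0 v false.
  by move=> v; case: (inv_sum I v) => // [[u [b H]]]; rewrite Ht in H.
apply/eqP; rewrite eq_le; apply/andP; split.
- apply/ereal_infP => _ [p [Hp' Hl'] <-].
  exact: final_le T1 T2 (inv_s I) (inv_t I) p Hp' Hl'.
- case: (inv_mu I) => [->|[p [Hp' [Hl' Hw]]]]; first exact: leey.
  by apply: ge_ereal_inf; exists (pathw s p)%:E => //; exists p.
Qed.

End Proof.

Theorem theorem3p2 (R : realType) (V : finType) (E : rel V) (w : V -> V -> R)
    (s t : V) :
  symmetric E ->
  (forall u v, E u v -> w u v = w v u) ->
  (forall u v, E u v -> 0 < w u v) ->
  s != t ->
  forall st : state R V,
    reachable E w (init R s t) st -> terminated st ->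
    mu st = dist E w s t.
Proof.
move=> H1 H2 H3 H4 st0; exact: main.
Qed.
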